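(* Let $G\subsetneq\mathbb{R}^n$ be a domain and let $\eta:[0,\infty)\to[0,\infty)$ be a strictly increasing homeomorphism with $\eta(0)=0$. If the identity mapping $\mathrm{id}:(G,j_G)\to(G,k_G)$ is $\eta$-quasisymmetric, then $G$ is $\varphi$-uniform for some $\varphi$ depending only on $\eta$.
   Context: For $x\in G$, $\delta(x)$ is the Euclidean distance from $x$ to $\partial G$. The distance ratio metric is $j_G(x,y)=\log\Big(1+\frac{|x-y|}{\min\{\delta(x),\delta(y)\}}\Big)$ and the quasihyperbolic metric is $k_G(x,y)=\inf_\gamma\int_\gamma\frac{|dz|}{\delta(z)}$, the infimum over rectifiable paths joining $x,y$ in $G$. A map $f:(X_1,d_1)\to(X_2,d_2)$ between metric spaces is $\eta$-quasisymmetric if $\frac{d_2(f(x),f(y))}{d_2(f(y),f(z))}\le\eta\big(\frac{d_1(x,y)}{d_1(y,z)}\big)$ for all $x,y,z\in X_1$ with $x\ne y\ne z$. Given a strictly increasing homeomorphism $\varphi:[0,\infty)\to[0,\infty)$ with $\varphi(0)=0$, $G$ is $\varphi$-uniform if $k_G(x,y)\le\varphi\big(\frac{|x-y|}{\min\{\delta(x),\delta(y)\}}\big)$ for all $x,y\in G$. *)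

(* Defs.v *)
(* R : realType, R^n = 'rV[R]_n with the Euclidean norm. *)
From HB Require Import structures.
From mathcomp Require Import all_boot all_order all_algebra.
From mathcomp Require Import all_classical all_reals all_analysis.
Set Implicit Arguments. Unset Strict Implicit. Unset Printing Implicit Defensive.
Import Order.TTheory GRing.Theory Num.Theory.
Import numFieldNormedType.Exports.
Local Open Scope classical_set_scope.
Local Open Scope ring_scope.

Section Defs.
Variable R : realType.

Definition enorm (n : nat) (x : 'rV[R]_n) : R :=
  Num.sqrt (\sum_(i < n) (x ord0 i) ^+ 2).

Definition domain (n : nat) (G : set 'rV[R]_n) : Prop :=
  open G /\ connected G /\ G !=set0.

Definition bdry (n : nat) (G : set 'rV[R]_n) : set 'rV[R]_n :=
  closure G `\` interior G.

Definition delta (n : nat) (G : set 'rV[R]_n) (x : 'rV[R]_n) : R :=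
  inf [set enorm (x - z) | z in bdry G].

Definition jG (n : nat) (G : set 'rV[R]_n) (x y : 'rV[R]_n) : R :=
  ln (1 + enorm (x - y) / Num.min (delta G x) (delta G y)).

Definition partition (a b : R) (m : nat) (t : nat -> R) : Prop :=
  t 0%N = a /\ t m = b /\ (forall i, (i < m)%N -> t i <= t i.+1).

Definition chord_sums (n : nat) (g : R -> 'rV[R]_n) (a b : R) : set R :=
  [set r | exists m t, partition a b m t /\
     r = \sum_(i < m) enorm (g (t i.+1) - g (t i))].

Definition plen (n : nat) (g : R -> 'rV[R]_n) (a b : R) : R :=
  sup (chord_sums g a b).

Definition path_in (n : nat) (G : set 'rV[R]_n) (x y : 'rV[R]_n)
  (g : R -> 'rV[R]_n) : Prop :=
  {within [set s | 0 <= s <= 1], continuous g} /\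
  (forall s, 0 <= s <= 1 -> G (g s)) /\ g 0 = x /\ g 1 = y.

Definition rectifiable (n : nat) (g : R -> 'rV[R]_n) : Prop :=
  has_ubound (chord_sums g 0 1).

(* quasihyperbolic length  int_g |dz| / delta(z), as the (Riemann-Stieltjes)
   integral of 1/delta(g(s)) with respect to arc length: supremum of the
   lower Darboux-Stieltjes sums *)
Definition qhlen (n : nat) (G : set 'rV[R]_n) (g : R -> 'rV[R]_n) : R :=
  sup [set r | exists m t, partition 0 1 m t /\
     r = \sum_(i < m) (inf [set (delta G (g s))^-1 | s in
                              [set s | t i <= s <= t i.+1]]
                       * plen g (t i) (t i.+1))].

Definition kG (n : nat) (G : set 'rV[R]_n) (x y : 'rV[R]_n) : R :=
  inf [set r | exists g, path_in G x y g /\ rectifiable g /\ r = qhlen G g].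

Definition homeo0 (f : R -> R) : Prop :=
  f 0 = 0 /\
  (forall s t, 0 <= s -> s < t -> f s < f t) /\
  {within [set s | 0 <= s], continuous f} /\
  (forall y, 0 <= y -> exists2 s, 0 <= s & f s = y).

Definition quasisymmetric (T1 T2 : Type) (A : set T1) (d1 : T1 -> T1 -> R)
  (d2 : T2 -> T2 -> R) (f : T1 -> T2) (eta : R -> R) : Prop :=
  forall x y z, A x -> A y -> A z -> x <> y -> y <> z ->
    d2 (f x) (f y) / d2 (f y) (f z) <= eta (d1 x y / d1 y z).

Definition phi_uniform (n : nat) (G : set 'rV[R]_n) (phi : R -> R) : Prop :=
  forall x y, G x -> G y ->
    kG G x y <= phi (enorm (x - y) / Num.min (delta G x) (delta G y)).

End Defs.

(* Main.v *)
Require Import Defs.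
From HB Require Import structures.
From mathcomp Require Import all_boot all_order all_algebra.
From mathcomp Require Import all_classical all_reals all_analysis.
From mathcomp Require Import ring lra zify.
Import Order.TTheory GRing.Theory Num.Theory.
Import numFieldNormedType.Exports.
Local Open Scope classical_set_scope.
Local Open Scope ring_scope.
Set Implicit Arguments. Unset Strict Implicit. Unset Printing Implicit Defensive.


Section S.
Variable R : realType.
Variable n : nat.
Implicit Types u v : 'rV[R]_n.

Lemma sumsq_ge0 v : 0 <= \sum_(i < n) (v ord0 i) ^+ 2.
Proof. by apply: sumr_ge0 => i _; exact: sqr_ge0. Qed.

Lemma enorm_ge0 v : 0 <= enorm v.
Proof. exact: sqrtr_ge0. Qed.

Lemma enorm_sq v : enorm v ^+ 2 = \sum_(i < n) (v ord0 i) ^+ 2.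
Proof. by rewrite /enorm sqr_sqrtr // sumsq_ge0. Qed.

Lemma enormZ (c : R) v : enorm (c *: v) = `|c| * enorm v.
Proof.
rewrite /enorm (eq_bigr (fun i => c ^+ 2 * (v ord0 i) ^+ 2)); last first.
  by move=> i _; rewrite mxE exprMn.
by rewrite -mulr_sumr sqrtrM ?sqr_ge0 // sqrtr_sqr.
Qed.

Lemma enormN v : enorm (- v) = enorm v.
Proof. by rewrite -scaleN1r enormZ normrN normr1 mul1r. Qed.

Lemma enormB u v : enorm (u - v) = enorm (v - u).
Proof. by rewrite -enormN opprB. Qed.

Lemma enorm_coord v i : `|v ord0 i| <= enorm v.
Proof.
rewrite -(sqrtr_sqr (v ord0 i)) /enorm ler_sqrt ?sumsq_ge0 //.
by rewrite (bigD1 i) //= lerDl; apply: sumr_ge0 => j _; exact: sqr_ge0.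
Qed.

Lemma enorm_bound v (M : R) : 0 <= M -> (forall i, `|v ord0 i| <= M) ->
  enorm v <= n%:R * M.
Proof.
move=> M0 hv; rewrite /enorm -(@ger0_norm _ (n%:R * M)) ?mulr_ge0 //.
rewrite -sqrtr_sqr ler_sqrt ?sqr_ge0 //.
apply: (@le_trans _ _ (\sum_(i < n) M ^+ 2)).
  apply: ler_sum => i _; rewrite -real_normK ?num_real //.
  by rewrite lerXn2r ?nnegrE ?normr_ge0 // hv.
rewrite sumr_const card_ord exprMn -[M ^+ 2 *+ n]mulr_natl.
apply: ler_wpM2r; first exact: sqr_ge0.
rewrite -natrX ler_nat expnS expn1.
by case: (n) => //= k; rewrite leq_pmulr.
Qed.

Lemma coord_sq_le v i : (v ord0 i) ^+ 2 <= \sum_(j < n) (v ord0 j) ^+ 2.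
Proof. by rewrite (bigD1 i) //= lerDl; apply: sumr_ge0 => j _; exact: sqr_ge0. Qed.

Lemma dot_le u v : \sum_(i < n) u ord0 i * v ord0 i <= enorm u * enorm v.
Proof.
set A := \sum_(i < n) (u ord0 i) ^+ 2; set B := \sum_(i < n) (v ord0 i) ^+ 2.
have hA : 0 <= A by exact: sumsq_ge0.
have hB : 0 <= B by exact: sumsq_ge0.
have [A0|An0] := eqVneq A 0.
  have ui : forall i, u ord0 i = 0.
    move=> i; apply/eqP; rewrite -sqrf_eq0; apply/eqP.
    by apply/le_anti; rewrite sqr_ge0 andbT -A0 coord_sq_le.
  rewrite big1 ?mulr_ge0 ?enorm_ge0 // => i _; by rewrite ui mul0r.
have [B0|Bn0] := eqVneq B 0.
  have vi : forall i, v ord0 i = 0.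
    move=> i; apply/eqP; rewrite -sqrf_eq0; apply/eqP.
    by apply/le_anti; rewrite sqr_ge0 andbT -B0 coord_sq_le.
  rewrite big1 ?mulr_ge0 ?enorm_ge0 // => i _; by rewrite vi mulr0.
set a := enorm u; set b := enorm v.
have ha : a ^+ 2 = A by exact: enorm_sq.
have hb : b ^+ 2 = B by exact: enorm_sq.
have a0 : 0 < a by rewrite lt_neqAle enorm_ge0 andbT; apply/eqP => a0; move: An0; rewrite -ha -a0 expr0n eqxx.
have b0 : 0 < b by rewrite lt_neqAle enorm_ge0 andbT; apply/eqP => b0; move: Bn0; rewrite -hb -b0 expr0n eqxx.
have key : 0 <= \sum_(i < n) (b * u ord0 i - a * v ord0 i) ^+ 2.
  by apply: sumr_ge0 => i _; exact: sqr_ge0.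
have E : \sum_(i < n) (b * u ord0 i - a * v ord0 i) ^+ 2 =
   b ^+ 2 * A + a ^+ 2 * B - 2 * a * b * \sum_(i < n) u ord0 i * v ord0 i.
  rewrite (eq_bigr (fun i => b^+2 * (u ord0 i)^+2 + a^+2 * (v ord0 i)^+2 - 2*a*b*(u ord0 i * v ord0 i))); last by move=> i _; ring.
  by rewrite sumrB big_split /= -!mulr_sumr.
rewrite E ha hb in key.
set D := \sum_(i < n) _ in key *.
have : 2 * a * b * D <= 2 * a * b * (a * b) by nra.
by rewrite ler_pM2l // mulr_gt0 // mulr_gt0.
Qed.

Lemma enormD u v : enorm (u + v) <= enorm u + enorm v.
Proof.
have h0 : 0 <= enorm u + enorm v by rewrite addr_ge0 ?enorm_ge0.
rewrite -(ger0_norm h0) -sqrtr_sqr /enorm ler_sqrt ?sqr_ge0 //.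
rewrite -/(enorm u) -/(enorm v).
rewrite (eq_bigr (fun i => (u ord0 i)^+2 + (v ord0 i)^+2 + 2 * (u ord0 i * v ord0 i))); last first.
  by move=> i _; rewrite mxE; ring.
rewrite !big_split /= -mulr_sumr -!enorm_sq.
have := dot_le u v; set D := \sum_(i < n) _ => hD.
have := enorm_ge0 u; have := enorm_ge0 v; nra.
Qed.

Lemma enorm_tri (x y z : 'rV[R]_n) : enorm (x - z) <= enorm (x - y) + enorm (y - z).
Proof. by apply: le_trans (enormD _ _); rewrite addrA subrK. Qed.

End S.


Section G1.
Variable R : realType.

Lemma sup_ge0' (E : set R) : (forall x, E x -> 0 <= x) -> 0 <= sup E.
Proof.
move=> h; have [hs|hs] := pselect (has_sup E); last by rewrite sup_out.
case: (hs) => [[x Ex] _]; apply: le_trans (h _ Ex) _.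
by apply: sup_upper_bound.
Qed.

Lemma inf_ge0' (E : set R) : (forall x, E x -> 0 <= x) -> 0 <= inf E.
Proof.
move=> h; have [[x Ex]|E0] := pselect (E !=set0).
  by apply: lb_le_inf; [exists x|move=> y /h].
have -> : E = set0 by apply/seteqP; split => y // Ey; apply: E0; exists y.
by rewrite inf0.
Qed.

Lemma inf_le' (E : set R) x : (forall y, E y -> 0 <= y) -> E x -> inf E <= x.
Proof. by move=> h Ex; apply: ge_inf => //; exists 0 => y /h. Qed.

Lemma sup_ge' (E : set R) x : has_ubound E -> E x -> x <= sup E.
Proof. by move=> h Ex; apply: ub_le_sup. Qed.

Variable n : nat.
Variable G : set 'rV[R]_n.

Lemma delta_ge0 x : 0 <= delta G x.
Proof. by apply: inf_ge0' => _ [z _ <-]; exact: enorm_ge0. Qed.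

Lemma delta_le x b : bdry G b -> delta G x <= enorm (x - b).
Proof. by move=> hb; apply: inf_le' => [_ [z _ <-]|]; [exact: enorm_ge0|exists b]. Qed.

Lemma delta_lip (w y : 'rV[R]_n) : bdry G !=set0 ->
  delta G w <= delta G y + enorm (w - y).
Proof.
move=> [b0 hb0]; rewrite -lerBlDr; apply: lb_le_inf; first by exists (enorm (y - b0)), b0.
move=> _ [b hb <-]; rewrite lerBlDr.
apply: le_trans (delta_le w hb) _.
by rewrite [X in _ <= X]addrC; apply: enorm_tri.
Qed.

Lemma bdry_notin b : open G -> bdry G b -> ~ G b.
Proof.
move=> oG [_ nb] Gb; apply: nb.
by move: oG; rewrite openE => /(_ _ Gb).
Qed.

Lemma delta_gt0 y : open G -> G y -> bdry G !=set0 -> 0 < delta G y.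
Proof.
move=> oG Gy [b0 hb0].
have : nbhs y G by rewrite nbhsE; exists G.
move=> /nbhs_ballP [e e0 hball].
suff : e <= delta G y by apply: lt_le_trans. apply: lb_le_inf; first by exists (enorm (y - b0)), b0.
move=> _ [b hb <-].
have nb : ~ ball y e b by move=> /hball; exact: bdry_notin.
have : ~ (`|y - b| < e) by move=> h; apply: nb; rewrite -ball_normE.
move/negP; rewrite -leNgt => hle.
have [h0|hne] := eqVneq `|y - b| 0.
  by move: hle; rewrite h0 leNgt e0.
have [i hi] := mx_norm_neq0 hne.
apply: le_trans hle _; rewrite [X in X <= _]hi.
by case: i {hi} => i j /=; rewrite (ord1 i); exact: enorm_coord.
Qed.

End G1.


Section C.
Variable R : realType.

Lemma eps_delta_within (A : set R) (f : R -> R) :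
  (forall x, A x -> forall e, 0 < e -> exists2 d, 0 < d &
     forall t, A t -> `|t - x| < d -> `|f t - f x| < e) ->
  {within A, continuous f}.
Proof.
move=> h; apply/subspace_continuousP => x Ax.
apply/cvgrPdist_lt => e e0; rewrite near_withinE.
have [d d0 hd] := h x Ax e e0.
exists d => //= t /= hb At.
rewrite /from_subspace /= distrC; apply: hd => //; rewrite distrC; exact: hb.
Qed.

Variable n : nat.

Lemma coord_le_mx (v : 'rV[R]_n) i : `|v ord0 i| <= `|v|.
Proof.
rewrite [leRHS]/Num.norm /= mx_normrE; apply/bigmax_geP; right => /=.
by exists (ord0, i).
Qed.

Lemma within_eps_delta (A : set R) (g : R -> 'rV[R]_n) :
  {within A, continuous g} -> forall x, A x -> forall e, 0 < e ->
  exists2 d, 0 < d & forall t, A t -> `|t - x| < d -> enorm (g t - g x) < e.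
Proof.
move=> /subspace_continuousP hc x Ax e e0.
have e1 : 0 < e / (n.+1)%:R by rewrite divr_gt0.
have := hc x Ax; move/cvgrPdist_lt => /(_ _ e1); rewrite near_withinE.
move=> /nbhs_ballP [d d0 hd]; exists d => // t At htx.
have := hd t; rewrite -ball_normE /= distrC => /(_ htx At) hlt.
apply: le_lt_trans (enorm_bound (M := e / (n.+1)%:R) _ _) _.
- exact: ltW.
- move=> i; apply: le_trans (coord_le_mx _ i) _.
  by rewrite distrC in hlt; apply: ltW.
rewrite mulrCA gtr_pMr // ltr_pdivrMr ?ltr0n // mul1r ltr_nat //.
Qed.

End C.


Section B.
Variable R : realType.
Variable n : nat.

Lemma mx_le_enorm (v : 'rV[R]_n) : `|v| <= enorm v.
Proof.
have [h0|hne] := eqVneq `|v| 0; first by rewrite h0 enorm_ge0.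
have [i hi] := mx_norm_neq0 hne.
rewrite [X in X <= _]hi.
by case: i {hi} => i j /=; rewrite (ord1 i); exact: enorm_coord.
Qed.

Lemma nbhs_seg (y w : 'rV[R]_n) (s0 : R) (B : set 'rV[R]_n) :
  nbhs (y + s0 *: (w - y)) B ->
  exists2 d, 0 < d & forall t, `|t - s0| < d -> B (y + t *: (w - y)).
Proof.
move=> /nbhs_ballP [e e0 he].
have k0 : 0 < enorm (w - y) + 1 by rewrite ltr_wpDl ?enorm_ge0.
exists (e / (enorm (w - y) + 1)); first by rewrite divr_gt0.
move=> t ht; apply: he; rewrite -ball_normE /=.
apply: le_lt_trans (mx_le_enorm _) _.
rewrite opprD addrACA subrr add0r -scalerBl enormZ.
rewrite distrC.
move: ht; rewrite ltr_pdivlMr // => ht.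
apply: le_lt_trans ht; apply: ler_wpM2l => //; by rewrite lerDl.
Qed.

Lemma ball_in (G : set 'rV[R]_n) (y w : 'rV[R]_n) :
  open G -> G y -> enorm (w - y) < delta G y -> G w.
Proof.
move=> oG Gy hw; apply/not_notP => nGw.
pose p := fun s : R => y + s *: (w - y).
pose A := [set s : R | 0 <= s <= 1 /\ ~ G (p s)].
have A1 : A 1 by split; [rewrite ler01 lexx|rewrite /p scale1r addrC subrK].
have lbA : has_lbound A by exists 0 => s [/andP[]].
have hinf : has_inf A by split => //; exists 1.
set s0 := inf A.
have s0ge : 0 <= s0 by apply: lb_le_inf; [exists 1|move=> s [/andP[]]].
have s0le : s0 <= 1 by apply: ge_inf.
have nG : ~ G (p s0).
  move=> Gp.
  have : nbhs (p s0) G by move: oG; rewrite openE => /(_ _ Gp).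
  move=> /nbhs_seg [d d0 hd].
  have [t At htd] := inf_adherent d0 hinf.
  have ts : s0 <= t by apply: ge_inf.
  case: At => _; apply; apply: hd.
  by rewrite ger0_norm ?subr_ge0 // ltrBlDl.
have s0pos : 0 < s0.
  rewrite lt_neqAle s0ge andbT; apply/eqP => h0; apply: nG.
  by rewrite /p -h0 scale0r addr0.
have cl : closure G (p s0).
  move=> B /nbhs_seg [d d0 hd].
  pose t := s0 - Num.min d s0 / 2.
  have m0 : 0 < Num.min d s0 by rewrite lt_min d0 s0pos.
  have mr : Num.min d s0 <= s0 by rewrite ge_min lexx orbT.
  have ml : Num.min d s0 <= d by rewrite ge_min lexx.
  have tlt : t < s0 by rewrite /t ltrBlDr ltrDl divr_gt0.
  have tge : 0 <= t.
    rewrite /t subr_ge0; apply: le_trans mr.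
    rewrite ler_pdivrMr //; have := ltW m0; lra.
  exists (p t); split; last first.
    apply: hd; rewrite /t addrAC subrr add0r normrN ger0_norm ?divr_ge0 ?ltW //.
    have := ml; have := m0; lra.
  apply/not_notP => nGt.
  have At : A t by split => //; rewrite tge /= (le_trans (ltW tlt)).
  by have := ge_inf lbA At; rewrite leNgt tlt.
have bp : bdry G (p s0) by split => // /interior_subset.
have := delta_le y bp; rewrite /p opprD addrA subrr add0r enormN enormZ.
rewrite ger0_norm // => h.
have : s0 * enorm (w - y) <= enorm (w - y) by rewrite ler_piMl ?enorm_ge0.
move: hw; lra.
Qed.

End B.


Section P.
Variable R : realType.
Variable n : nat.
Implicit Types (g : R -> 'rV[R]_n) (a b c : R).

Lemma part_mono a b m t : Defs.partition a b m t ->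
  forall i j, (i <= j)%N -> (j <= m)%N -> t i <= t j.
Proof.
move=> [_ [_ hm]] i; elim=> [|j IH] hij hjm.
  by have -> : i = 0%N by lia.
have [->|hij'] := eqVneq i j.+1; first exact: lexx.
apply: le_trans (IH _ _) (hm _ _); lia.
Qed.

Lemma part_in a b m t : Defs.partition a b m t -> forall i, (i <= m)%N -> a <= t i <= b.
Proof.
move=> hp i him; have [h0 [hm _]] := hp.
rewrite -{1}h0 -hm; apply/andP; split; apply: (part_mono hp); lia.
Qed.

Lemma part_le a b m t : Defs.partition a b m t -> a <= b.
Proof. by move=> hp; have /andP[h1 h2] := part_in hp (leqnn m); exact: le_trans h2. Qed.

Lemma chord_ge0 g a b r : chord_sums g a b r -> 0 <= r.
Proof. by move=> [m [t [_ ->]]]; apply: sumr_ge0 => i _; exact: enorm_ge0. Qed.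

Lemma plen_ge0 g a b : 0 <= plen g a b.
Proof. apply: sup_ge0' => r; exact: chord_ge0. Qed.

Lemma chord1 g a b : a <= b -> chord_sums g a b (enorm (g b - g a)).
Proof.
move=> ab; exists 1%N, (fun i => if i == 0%N then a else b); split.
  by split => //; split => // i; rewrite ltnS leqn0 => /eqP ->.
by rewrite big_ord1.
Qed.

Lemma chord_concat g a b c P Q : chord_sums g a b P -> chord_sums g b c Q ->
  chord_sums g a c (P + Q).
Proof.
move=> [m1 [t1 [[h10 [h1m h1]] ->]]] [m2 [t2 [[h20 [h2m h2]] ->]]].
pose t i := if (i <= m1)%N then t1 i else t2 (i - m1)%N.
exists (m1 + m2)%N, t; split.
  split; first by rewrite /t leq0n.
  split.
    rewrite /t; case: ifP => h; last by rewrite addKn.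
    have m20 : m2 = 0%N by lia.
    by rewrite m20 addn0 h1m -h20 -h2m m20.
  move=> i hi; rewrite /t; case: ifP => hi1; case: ifP => hi2.
  - by apply: h1; lia.
  - have -> : i = m1 by lia.
    by rewrite h1m -h20 subSnn; apply: h2; lia.
  - lia.
  - by rewrite subSn; [apply: h2|]; lia.
rewrite big_split_ord /=; congr (_ + _); apply: eq_bigr => i _; rewrite /t /=.
  by rewrite ifT ?ifT //; case: i => /= i hi; lia.
case: i => /= i hi; rewrite ifF; last by lia.
rewrite -addnS addKn.
case: ifP => h.
  have i0 : i = 0%N by lia.
  by rewrite i0 addn0 h1m h20.
by rewrite addKn.
Qed.

Lemma bounded_left g a b c : b <= c -> has_ubound (chord_sums g a c) ->
  has_ubound (chord_sums g a b).
Proof.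
move=> bc [M hM]; exists M => P hP.
have hQ := chord1 g bc.
apply: le_trans (hM _ (chord_concat hP hQ)); by rewrite lerDl enorm_ge0.
Qed.

Lemma bounded_right g a b c : a <= b -> has_ubound (chord_sums g a c) ->
  has_ubound (chord_sums g b c).
Proof.
move=> ab [M hM]; exists M => Q hQ.
have hP := chord1 g ab.
apply: le_trans (hM _ (chord_concat hP hQ)); by rewrite lerDr enorm_ge0.
Qed.

Lemma plen_add g a b c : a <= b -> b <= c -> has_ubound (chord_sums g a c) ->
  plen g a b + plen g b c <= plen g a c.
Proof.
move=> ab bc hb.
have key : forall P Q, chord_sums g a b P -> chord_sums g b c Q -> P + Q <= plen g a c.
  by move=> P Q hP hQ; exact: (sup_ge' hb (chord_concat hP hQ)).
rewrite -lerBrDr; apply: ge_sup; first by exists (enorm (g b - g a)); exact: chord1.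
move=> P hP; rewrite lerBrDr addrC -lerBrDr.
apply: ge_sup; first by exists (enorm (g c - g b)); exact: chord1.
by move=> Q hQ; rewrite lerBrDr addrC key.
Qed.

Lemma plen_sum_aux g m t : (forall i, (i < m)%N -> t i <= t i.+1) ->
  has_ubound (chord_sums g (t 0%N) (t m)) ->
  \sum_(i < m) plen g (t i) (t i.+1) <= plen g (t 0%N) (t m).
Proof.
elim: m => [|m IH] hmono hb.
  by rewrite big_ord0 plen_ge0.
rewrite big_ord_recr /=.
have hp : Defs.partition (t 0%N) (t m.+1) m.+1 t by [].
have t0m : t 0%N <= t m by apply: (part_mono hp); lia.
apply: le_trans (plen_add t0m (hmono _ (ltnSn m)) hb).
apply: lerD => //; apply: IH.
  by move=> i hi; apply: hmono; lia.
exact: bounded_left (hmono _ (ltnSn m)) hb.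
Qed.

Lemma plen_sum g a b m t : Defs.partition a b m t -> has_ubound (chord_sums g a b) ->
  \sum_(i < m) plen g (t i) (t i.+1) <= plen g a b.
Proof.
move=> hp; have [h0 [hm hmono]] := hp; rewrite -h0 -hm.
exact: plen_sum_aux.
Qed.

Lemma plen_ge_chord g a b : a <= b -> has_ubound (chord_sums g a b) ->
  enorm (g b - g a) <= plen g a b.
Proof. by move=> ab hb; apply: sup_ge' hb _; exact: chord1. Qed.

End P.


Section Q.
Variable R : realType.
Variable n : nat.
Variable G : set 'rV[R]_n.
Implicit Types (g : R -> 'rV[R]_n).

Definition infterm g (a b : R) :=
  inf [set (delta G (g s))^-1 | s in [set s | a <= s <= b]].

Lemma infterm_ge0 g a b : 0 <= infterm g a b.
Proof. by apply: inf_ge0' => _ [s _ <-]; rewrite invr_ge0 delta_ge0. Qed.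

Lemma infterm_le g a b s : a <= s <= b -> infterm g a b <= (delta G (g s))^-1.
Proof.
move=> hs; apply: inf_le' => [_ [u _ <-]|]; first by rewrite invr_ge0 delta_ge0.
by exists s.
Qed.

Lemma infterm_ge g a b c : a <= b -> (forall s, a <= s <= b -> c <= (delta G (g s))^-1) ->
  c <= infterm g a b.
Proof.
move=> ab h; apply: lb_le_inf; first by exists (delta G (g a))^-1, a => //; rewrite /= lexx ab.
by move=> _ [s hs <-]; exact: h.
Qed.

Definition dsum g m (t : nat -> R) :=
  \sum_(i < m) (infterm g (t i) (t i.+1) * plen g (t i) (t i.+1)).

Lemma qhlenE g : qhlen G g = sup [set r | exists m t, Defs.partition 0 1 m t /\ r = dsum g m t].
Proof. by []. Qed.

Lemma dsum_ge0 g m t : 0 <= dsum g m t.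
Proof. by apply: sumr_ge0 => i _; rewrite mulr_ge0 ?infterm_ge0 ?plen_ge0. Qed.

Lemma qhlen_ge0 g : 0 <= qhlen G g.
Proof. rewrite qhlenE; apply: sup_ge0' => r [m [t [_ ->]]]; exact: dsum_ge0. Qed.

Lemma kG_le x y g : path_in G x y g -> rectifiable g -> kG G x y <= qhlen G g.
Proof.
move=> hp hr; apply: inf_le' => [r [g' [_ [_ ->]]]|]; first exact: qhlen_ge0.
by exists g.
Qed.

Lemma kG_ge0 x y : 0 <= kG G x y.
Proof. by apply: inf_ge0' => r [g' [_ [_ ->]]]; exact: qhlen_ge0. Qed.

Lemma kG_ge x y c : (exists g, path_in G x y g /\ rectifiable g) ->
  (forall g, path_in G x y g -> rectifiable g -> c <= qhlen G g) -> c <= kG G x y.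
Proof.
move=> [g0 [h0 r0]] h; apply: lb_le_inf; first by exists (qhlen G g0), g0.
by move=> _ [g [hp [hr ->]]]; exact: h.
Qed.

Lemma kG_refl x : G x -> kG G x x <= 0.
Proof.
move=> Gx; pose g := fun _ : R => x.
have ch : forall a b r, chord_sums g a b r -> r = 0.
  move=> a b r [m [t [_ ->]]]; apply: big1 => i _.
  by rewrite /g subrr /enorm big1 ?sqrtr0 // => j _; rewrite mxE expr0n.
have pl : forall a b, plen g a b = 0.
  move=> a b; rewrite /plen; have [[r hr]|ne] := pselect (chord_sums g a b !=set0).
    apply/le_anti; rewrite plen_ge0 andbT; apply: ge_sup; first by exists r.
    by move=> r' /ch ->.
  have -> : chord_sums g a b = set0.
    by apply/seteqP; split => r // hr; apply: ne; exists r.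
  exact: sup0.
have hp : path_in G x x g.
  split; first by apply: continuous_subspaceT => s; exact: cvg_cst.
  by split.
have hr : rectifiable g by exists 0 => r /ch ->.
apply: le_trans (kG_le hp hr) _.
rewrite qhlenE; apply: ge_sup.
  by exists (dsum g 1 (fun i => if i == 0%N then 0 else 1)), 1%N, (fun i => if i == 0%N then 0 else 1); split => //; split => //; split => // i; rewrite ltnS leqn0 => /eqP ->; rewrite ler01.
move=> r [m [t [_ ->]]]; rewrite /dsum big1 // => i _; by rewrite pl mulr0.
Qed.

End Q.


Section U.
Variable R : realType.
Variable n : nat.
Variable G : set 'rV[R]_n.

Lemma inv_le_pos (a b : R) : 0 < a -> a <= b -> b^-1 <= a^-1.
Proof. by move=> a0 ab; rewrite lef_pV2 ?posrE // (lt_le_trans a0 ab). Qed.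

Lemma tele (t : nat -> R) m : \sum_(i < m) (t i.+1 - t i) = t m - t 0%N.
Proof. by rewrite -(big_mkord xpredT (fun i => t i.+1 - t i)) telescope_sumr. Qed.

Variables y z : 'rV[R]_n.
Definition seg (s : R) := y + s *: (z - y).

Lemma seg_diff a b : enorm (seg b - seg a) = `|b - a| * enorm (z - y).
Proof. by rewrite /seg opprD addrACA subrr add0r -scalerBl enormZ. Qed.

Lemma seg_chord a b r : chord_sums seg a b r -> r = (b - a) * enorm (z - y).
Proof.
move=> [m [t [hp ->]]]; have [h0 [hm hmono]] := hp.
rewrite (eq_bigr (fun i : 'I_m => (t i.+1 - t i) * enorm (z - y))); last first.
  by move=> i _; rewrite seg_diff ger0_norm // subr_ge0 hmono.
by rewrite -mulr_suml tele h0 hm.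
Qed.

Lemma seg_plen a b : a <= b -> plen seg a b <= (b - a) * enorm (z - y).
Proof.
move=> ab; apply: ge_sup; first by exists (enorm (seg b - seg a)); exact: chord1.
by move=> r' /seg_chord ->.
Qed.

Lemma seg_rect : rectifiable seg.
Proof. by exists ((1 - 0) * enorm (z - y)) => r /seg_chord ->. Qed.

Lemma seg_upper : open G -> G y -> bdry G !=set0 ->
  enorm (z - y) = delta G y / 2 -> kG G y z <= 1.
Proof.
move=> oG Gy B0 hL.
set rho := delta G y.
have r0 : 0 < rho by exact: delta_gt0.
have segy : forall s, 0 <= s <= 1 -> enorm (seg s - y) <= rho / 2.
  move=> s /andP[s0 s1]; rewrite /seg addrC addKr enormZ ger0_norm // hL.
  by rewrite ler_piMl // divr_ge0 // ltW.
have segG : forall s, 0 <= s <= 1 -> G (seg s).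
  move=> s hs; apply: (ball_in oG Gy); apply: le_lt_trans (segy _ hs) _.
  by rewrite ltr_pdivrMr // ltr_pMr // ltr1n.
have dseg : forall s, 0 <= s <= 1 -> rho / 2 <= delta G (seg s).
  move=> s hs; have := delta_lip y (seg s) B0; rewrite enormB.
  have := segy _ hs; rewrite -/rho; lra.
have hp : path_in G y z seg.
  split.
    apply: continuous_subspaceT => s.
    have -> : seg = (fun=> y) \+ (fun s => s *: (z - y)) by apply/funext.
    apply: continuousD; first exact: cvg_cst.
    by apply: continuousZr_tmp; exact: cvg_id.
  split; first exact: segG.
  by rewrite /seg scale0r addr0 scale1r addrC subrK.
apply: le_trans (kG_le hp seg_rect) _.
rewrite qhlenE; apply: ge_sup.
  by exists (dsum G seg 1 (fun i => if i == 0%N then 0 else 1)), 1%N, (fun i => if i == 0%N then 0 else 1); split => //; split => //; split => // i; rewrite ltnS leqn0 => /eqP ->; rewrite ler01.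
move=> r [m [t [hp' ->]]]; have [h0 [hm hmono]] := hp'.
apply: (@le_trans _ _ (\sum_(i < m) ((2 / rho) * ((t i.+1 - t i) * enorm (z - y))))).
  apply: ler_sum => i _; apply: ler_pM; rewrite ?infterm_ge0 ?plen_ge0 //.
    have ti : 0 <= t i <= 1 by apply: (part_in hp'); have := ltn_ord i; lia.
    apply: le_trans (@infterm_le _ _ G seg (t i) (t i.+1) (t i) _) _; first by rewrite lexx hmono.
    have -> : 2 / rho = (rho / 2)^-1 by rewrite invf_div.
    by apply: inv_le_pos; [rewrite divr_gt0|exact: dseg].
  by apply: seg_plen; apply: hmono.
rewrite -mulr_sumr -mulr_suml tele h0 hm hL subr0 mul1r.
rewrite -/rho (_ : 2 / rho * (rho / 2) = 1) //; field; by rewrite gt_eqF.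
Qed.

Lemma seg_path : open G -> G y -> bdry G !=set0 ->
  enorm (z - y) = delta G y / 2 -> path_in G y z seg /\ rectifiable seg.
Proof.
move=> oG Gy B0 hL.
set rho := delta G y.
have r0 : 0 < rho by exact: delta_gt0.
have segy : forall s, 0 <= s <= 1 -> enorm (seg s - y) <= rho / 2.
  move=> s /andP[s0 s1]; rewrite /seg addrC addKr enormZ ger0_norm // hL.
  by rewrite ler_piMl // divr_ge0 // ltW.
have segG : forall s, 0 <= s <= 1 -> G (seg s).
  move=> s hs; apply: (ball_in oG Gy); apply: le_lt_trans (segy _ hs) _.
  by rewrite ltr_pdivrMr // ltr_pMr // ltr1n.
split; last exact: seg_rect.
split.
  apply: continuous_subspaceT => s.
  have -> : seg = (fun=> y) \+ (fun s => s *: (z - y)) by apply/funext.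
  apply: continuousD; first exact: cvg_cst.
  by apply: continuousZr_tmp; exact: cvg_id.
split; first exact: segG.
by rewrite /seg scale0r addr0 scale1r addrC subrK.
Qed.

End U.


Section L.
Variable R : realType.
Variable n : nat.
Variable G : set 'rV[R]_n.

Lemma part2 (s : R) : 0 <= s <= 1 ->
  Defs.partition 0 1 2 (fun i => if i == 0%N then 0 else if i == 1%N then s else 1).
Proof.
move=> /andP[s0 s1]; split => //; split => // i.
by case: i => [|[|]] //= _.
Qed.

Lemma part1 : Defs.partition (0:R) 1 1 (fun i => if i == 0%N then 0 else 1).
Proof. by split => //; split => // i; rewrite ltnS leqn0 => /eqP ->; rewrite ler01. Qed.

Lemma qhlen_ge_dsum g m t :
  has_ubound [set r | exists m t, Defs.partition 0 1 m t /\ r = dsum G g m t] ->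
  Defs.partition 0 1 m t -> dsum G g m t <= qhlen G g.
Proof. by move=> hb hp; rewrite qhlenE; apply: sup_ge' hb _; exists m, t. Qed.

Lemma lower y z g : open G -> G y -> bdry G !=set0 ->
  enorm (z - y) = delta G y / 2 -> path_in G y z g -> rectifiable g ->
  1 / 4 <= qhlen G g.
Proof.
move=> oG Gy B0 hL [gc [gG [g0 g1]]] hrect.
set rho := delta G y.
have r0 : 0 < rho by exact: delta_gt0.
have cont := within_eps_delta gc.
have lip : forall s t, `|delta G (g t) - delta G (g s)| <= enorm (g t - g s).
  move=> s t; have := delta_lip (g t) (g s) B0; have := delta_lip (g s) (g t) B0.
  rewrite (enormB (g s)) => h1 h2; rewrite ler_norml; apply/andP; split; lra.
have fc : {within `[0, 1], continuous (fun s => delta G (g s))}.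
  apply: eps_delta_within => x /= hx e e0.
  rewrite in_itv /= in hx.
  have [d d0 hd] := cont x hx e e0.
  exists d => // t /= ht htx; rewrite in_itv /= in ht.
  by apply: le_lt_trans (lip _ _) (hd _ ht htx).
have [c hc hmin] := EVT_min ler01 fc.
rewrite in_itv /= in hc.
set mu := delta G (g c).
have mu0 : 0 < mu by apply: delta_gt0 => //; exact: gG.
have hb : has_ubound [set r | exists m t, Defs.partition 0 1 m t /\ r = dsum G g m t].
  exists (mu^-1 * plen g 0 1) => _ [m [t [hp ->]]].
  have [h0 [hm hmono]] := hp.
  apply: (@le_trans _ _ (\sum_(i < m) mu^-1 * plen g (t i) (t i.+1))).
    apply: ler_sum => i _; apply: ler_wpM2r; first exact: plen_ge0.
    have ti : 0 <= t i <= 1 by apply: (part_in hp); have := ltn_ord i; lia.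
    apply: le_trans (@infterm_le _ _ G g (t i) (t i.+1) (t i) _) _; first by rewrite lexx hmono.
    apply: inv_le_pos => //; apply: hmin; by rewrite in_itv /=.
  rewrite -mulr_sumr; apply: ler_wpM2l; first by rewrite invr_ge0 ltW.
  exact: plen_sum hp hrect.
have inv2 : forall s, 0 <= s <= 1 -> enorm (g s - y) <= rho -> (2 * rho)^-1 <= (delta G (g s))^-1.
  move=> s hs hle; apply: inv_le_pos; first by apply: delta_gt0 => //; exact: gG.
  have := delta_lip (g s) y B0; rewrite -/rho; lra.
have [[s1 [hs1 hge]]|nex] := pselect (exists s, 0 <= s <= 1 /\ rho <= enorm (g s - y)); last first.
  have hin : forall s, 0 <= s <= 1 -> enorm (g s - y) <= rho.
    move=> s hs; rewrite leNgt; apply/negP => hlt; apply: nex; exists s; split => //.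
    exact: ltW.
  apply: le_trans (qhlen_ge_dsum hb part1); rewrite /dsum big_ord1 /=.
  have i1 : (2 * rho)^-1 <= infterm G g 0 1.
    by apply: infterm_ge => [|s hs]; [exact: ler01|apply: inv2 => //; exact: hin].
  have p1 : rho / 2 <= plen g 0 1.
    by rewrite -hL -g1 -g0; apply: plen_ge_chord => //; exact: ler01.
  have q1 : 0 <= (2 * rho)^-1 by rewrite invr_ge0 mulr_ge0 // ltW.
  have q2 : 0 <= rho / 2 by rewrite divr_ge0 // ltW.
  apply: le_trans (ler_pM q1 q2 i1 p1).
  by rewrite (_ : (2 * rho)^-1 * (rho / 2) = 1 / 4) //; field; rewrite gt_eqF.
pose A := [set s : R | 0 <= s <= 1 /\ rho <= enorm (g s - y)].
have lbA : has_lbound A by exists 0 => s [/andP[]].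
have hinf : has_inf A by split => //; exists s1.
set s0 := inf A.
have s0ge : 0 <= s0 by apply: lb_le_inf; [exists s1|move=> s [/andP[]]].
have s0le : s0 <= 1 by apply: le_trans (ge_inf lbA (conj hs1 hge)) _; case/andP: hs1.
have hs0 : 0 <= s0 <= 1 by rewrite s0ge s0le.
have below : forall s, 0 <= s -> s < s0 -> enorm (g s - y) < rho.
  move=> s sge slt; rewrite ltNge; apply/negP => hle.
  have As : A s by split => //; rewrite sge /= (le_trans (ltW slt)).
  by have := ge_inf lbA As; rewrite leNgt slt.
have hlip : forall s t, enorm (g t - y) <= enorm (g s - y) + enorm (g t - g s).
  by move=> s t; rewrite [X in _ <= X]addrC; apply: enorm_tri.
have at_ge : rho <= enorm (g s0 - y).
  rewrite leNgt; apply/negP => hlt.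
  have e0 : 0 < rho - enorm (g s0 - y) by rewrite subr_gt0.
  have [d d0 hd] := cont s0 hs0 _ e0.
  have [t At htd] := inf_adherent d0 hinf.
  have ts : s0 <= t by apply: ge_inf.
  case: At => ht hrt.
  have := hd t ht; rewrite ger0_norm ?subr_ge0 // -/s0 ltrBlDl => /(_ htd) h.
  have := hlip s0 t; lra.
have at_le : enorm (g s0 - y) <= rho.
  rewrite leNgt; apply/negP => hgt.
  have s0pos : 0 < s0.
    rewrite lt_neqAle s0ge andbT; apply/eqP => h0.
    by move: hgt; rewrite -h0 g0 subrr (_ : enorm 0 = 0) ?ltNge ?ltW // /enorm big1 ?sqrtr0 // => i _; rewrite mxE expr0n.
  have e0 : 0 < enorm (g s0 - y) - rho by rewrite subr_gt0.
  have [d d0 hd] := cont s0 hs0 _ e0.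
  pose t := s0 - Num.min d s0 / 2.
  have m0 : 0 < Num.min d s0 by rewrite lt_min d0 s0pos.
  have mr : Num.min d s0 <= s0 by rewrite ge_min lexx orbT.
  have ml : Num.min d s0 <= d by rewrite ge_min lexx.
  have tlt : t < s0 by rewrite /t ltrBlDr ltrDl divr_gt0.
  have tge : 0 <= t by rewrite /t subr_ge0; have := ltW m0; lra.
  have ht : 0 <= t <= 1 by rewrite tge /= (le_trans (ltW tlt)).
  have htd : `|t - s0| < d.
    rewrite /t addrAC subrr add0r normrN ger0_norm ?divr_ge0 ?ltW //; lra.
  have h1 := hd t ht htd.
  have h2 := below t tge tlt.
  have := hlip t s0; rewrite (enormB (g s0) (g t)); lra.
apply: le_trans (qhlen_ge_dsum hb (part2 hs0)).
rewrite /dsum !big_ord_recr big_ord0 /= add0r.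
have i1 : (2 * rho)^-1 <= infterm G g 0 s0.
  apply: infterm_ge => // s /andP[sge sle]; apply: inv2; first by rewrite sge (le_trans sle).
  have [->|slt] := eqVneq s s0; first exact: at_le.
  by apply: ltW; apply: below => //; rewrite lt_neqAle slt.
have p1 : rho <= plen g 0 s0.
  apply: le_trans at_ge _; rewrite -g0; apply: plen_ge_chord => //.
  exact: bounded_left s0le hrect.
have t2 : 0 <= infterm G g s0 1 * plen g s0 1 by rewrite mulr_ge0 ?infterm_ge0 ?plen_ge0.
have : (2 * rho)^-1 * rho <= infterm G g 0 s0 * plen g 0 s0.
  by apply: ler_pM => //; rewrite ?invr_ge0 ?mulr_ge0 // ltW.
rewrite (_ : (2 * rho)^-1 * rho = 1 / 2); last by field; rewrite gt_eqF.
lra.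
Qed.

End L.


Section H.
Variable R : realType.

Lemma within_eps_delta_R (A : set R) (f : R -> R) :
  {within A, continuous f} -> forall x, A x -> forall e, 0 < e ->
  exists2 d, 0 < d & forall t, A t -> `|t - x| < d -> `|f t - f x| < e.
Proof.
move=> /subspace_continuousP hc x Ax e e0.
have := hc x Ax; move/cvgrPdist_lt => /(_ _ e0); rewrite near_withinE.
move=> /nbhs_ballP [d d0 hd]; exists d => // t At htx.
have := hd t; rewrite -ball_normE /= distrC => /(_ htx At).
by rewrite distrC.
Qed.

Definition cst32 : R := ln (3 / 2).

Lemma cst32_gt0 : 0 < cst32.
Proof. by apply: ln_gt0; rewrite ltr_pdivlMr // mul1r ltr_nat. Qed.

Variable eta : R -> R.
Hypothesis heta : homeo0 eta.

Definition phi (r : R) := eta (ln (1 + r) / cst32).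

Lemma eta_ge0 u : 0 <= u -> 0 <= eta u.
Proof.
case: heta => e0 [hs _] u0; rewrite -e0.
have [->|] := eqVneq u 0; first by rewrite e0.
by move=> un; apply: ltW; apply: hs; rewrite // lt_neqAle eq_sym un u0.
Qed.

Lemma eta_le u v : 0 <= u -> u <= v -> eta u <= eta v.
Proof.
case: heta => _ [hs _] u0 uv.
have [->|] := eqVneq u v; first exact: lexx.
by move=> un; apply: ltW; apply: hs; rewrite // lt_neqAle un uv.
Qed.

Lemma lnarg_ge0 r : 0 <= r -> 0 <= ln (1 + r) / cst32.
Proof.
move=> r0; apply: divr_ge0; last exact: ltW cst32_gt0.
by apply: ln_ge0; rewrite lerDl.
Qed.

Lemma homeo_phi : homeo0 phi.
Proof.
have c0 := cst32_gt0.
case: heta => e0 [hs [hc hsurj]].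
split; first by rewrite /phi addr0 ln1 mul0r e0.
split.
  move=> s t s0 st; apply: hs; first exact: lnarg_ge0.
  rewrite ltr_pM2r ?invr_gt0 // ltr_ln ?posrE ?ltrD2l //.
    by rewrite ltr_wpDr.
  by rewrite ltr_wpDr // (le_trans s0 (ltW st)).
split; last first.
  move=> y y0; have [s s0 hsy] := hsurj y y0.
  exists (expR (s * cst32) - 1).
    by rewrite subr_ge0; apply: le_trans (expR_ge1Dx _); rewrite lerDl mulr_ge0 // ltW.
  by rewrite /phi addrC subrK expRK mulfK ?gt_eqF.
apply: eps_delta_within => x /= x0 e ep.
have [d1 d10 hd1] := within_eps_delta_R hc (lnarg_ge0 x0) ep.
have e1 : 0 < d1 * cst32 by rewrite mulr_gt0.
have hl := continuous_ln (x := 1 + x) (ltr_wpDr x0 ltr01).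
move/cvgrPdist_lt: hl => /(_ _ e1) /nbhs_ballP [d2 d20 hd2].
exists d2 => // t /= t0 htx; rewrite /phi.
apply: hd1; first exact: lnarg_ge0.
have := hd2 (1 + t); rewrite -ball_normE /= opprD addrACA subrr add0r distrC.
move=> /(_ htx); rewrite distrC -mulrBl normrM (gtr0_norm (x := cst32^-1)) ?invr_gt0 //.
by rewrite ltr_pdivrMr.
Qed.

End H.


Section F.
Variable R : realType.

Lemma delta_empty n (G : set 'rV[R]_n) w : ~ (bdry G !=set0) -> delta G w = 0.
Proof.
move=> B0; rewrite /delta.
have -> : [set enorm (w - z) | z in bdry G] = set0.
  by apply/seteqP; split => // r [b hb _]; apply: B0; exists b.
exact: inf0.
Qed.

Lemma kG_le0_empty n (G : set 'rV[R]_n) x y : ~ (bdry G !=set0) -> kG G x y <= 0.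
Proof.
move=> B0.
have q0 : forall g, qhlen G g <= 0.
  move=> g; rewrite qhlenE; apply: ge_sup.
    by exists (dsum G g 1 (fun i => if i == 0%N then 0 else 1)), 1%N, (fun i => if i == 0%N then 0 else 1); split => //; exact: part1.
  move=> _ [m [t [[_ [_ hmono]] ->]]]; apply: sumr_le0 => i _.
  apply: mulr_le0_ge0; last exact: plen_ge0.
  apply: le_trans (@infterm_le _ _ G g (t i) (t i.+1) (t i) _) _.
    by rewrite lexx hmono.
  by rewrite delta_empty // invr0.
have [[r hr]|ne] := pselect ([set r | exists g, path_in G x y g /\ rectifiable g /\ r = qhlen G g] !=set0).
  apply: le_trans (inf_le' _ hr) _.
    by move=> _ [g [_ [_ ->]]]; exact: qhlen_ge0.
  by case: hr => g [_ [_ ->]].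
rewrite /kG (_ : [set r | _] = set0) ?inf0 //.
by apply/seteqP; split => // r hr; apply: ne; exists r.
Qed.

Lemma exist_dir n (G : set 'rV[R]_n) : G !=set0 -> G <> setT ->
  exists e : 'rV[R]_n, 0 < enorm e.
Proof.
case: n G => [|k] G [x0 Gx0] GT.
  exfalso; apply: GT; apply/seteqP; split => // v _.
  by rewrite (thinmx0 v) -(thinmx0 x0).
exists (const_mx 1); apply: lt_le_trans (enorm_coord _ ord0).
by rewrite mxE normr1.
Qed.

End F.

Unset Implicit Arguments.

Theorem proposition2p4 (R : realType) (eta : R -> R) :
  homeo0 eta ->
  exists phi : R -> R, homeo0 phi /\
    forall (n : nat) (G : set 'rV[R]_n),
      domain G -> G <> setT ->
      quasisymmetric G (jG G) (kG G) id eta ->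
      phi_uniform G phi.
Proof.
move=> heta; exists (phi eta); split; first exact: homeo_phi.
move=> n G [oG [cG G0]] GT QS x y Gx Gy.
have c0 := @cst32_gt0 R.
have mge0 : 0 <= enorm (x - y) / Num.min (delta G x) (delta G y).
  by rewrite divr_ge0 ?enorm_ge0 // le_min !delta_ge0.
have phige0 : 0 <= phi eta (enorm (x - y) / Num.min (delta G x) (delta G y)).
  by apply: (eta_ge0 heta); exact: lnarg_ge0.
have [B0|B0] := pselect (bdry G !=set0); last first.
  by apply: le_trans (kG_le0_empty _ _ B0) _.
have [exy|xy] := eqVneq x y.
  by subst y; apply: (le_trans (kG_refl Gx)).
have [e e0] := exist_dir G0 GT.
set rho := delta G y.
have r0 : 0 < rho by exact: delta_gt0.
pose z := y + (rho / 2 / enorm e) *: e.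
have hz : enorm (z - y) = delta G y / 2.
  rewrite /z addrC addKr enormZ ger0_norm ?divr_ge0 ?enorm_ge0 ?ltW //.
    by rewrite mulfVK ?gt_eqF.
have Gz : G z by apply: (ball_in oG Gy); rewrite hz -/rho; lra.
have [hp hr] := seg_path oG Gy B0 hz.
have kup := seg_upper oG Gy B0 hz.
have klo : 1 / 4 <= kG G y z.
  apply: kG_ge; first by exists (seg y z).
  by move=> g hp' hr'; exact: lower oG Gy B0 hz hp' hr'.
have zy : y <> z.
  move=> yz; move: hz; rewrite -yz subrr.
  rewrite (_ : enorm 0 = 0); last by rewrite /enorm big1 ?sqrtr0 // => i _; rewrite mxE expr0n.
  rewrite -/rho; lra.
have xy' : x <> y by apply/eqP.
have hQ := QS x y z Gx Gy Gz xy' zy; rewrite /= in hQ.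
have dz : rho / 2 <= delta G z.
  have := delta_lip y z B0; rewrite enormB hz -/rho; lra.
have jyz : cst32 R <= jG G y z.
  rewrite /jG /cst32 enormB hz -/rho.
  set m2 := Num.min rho (delta G z).
  have m20 : 0 < m2 by rewrite lt_min r0 (lt_le_trans _ dz) // divr_gt0.
  have m2le : m2 <= rho by rewrite ge_min lexx.
  have hq : 1 / 2 <= rho / 2 / m2 by rewrite ler_pdivlMr //; lra.
  rewrite ler_ln ?posrE; last first.
    by rewrite ltr_wpDr // divr_ge0 // ltW // divr_gt0.
    by rewrite divr_gt0.
  rewrite (_ : (3 : R) / 2 = 1 + 1 / 2); last by field.
  by rewrite lerD2l.
set r := enorm (x - y) / Num.min (delta G x) rho in mge0 phige0 *.
have jxy : 0 <= jG G x y by rewrite /jG; apply: ln_ge0; rewrite lerDl.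
have kyz0 : 0 < kG G y z by apply: lt_le_trans klo; rewrite divr_gt0.
have step : eta (jG G x y / jG G y z) <= phi eta r.
  apply: (eta_le heta); first by rewrite divr_ge0 // (le_trans (ltW c0)).
  apply: ler_wpM2l => //; apply: inv_le_pos => //.
rewrite -(divfK (lt0r_neq0 kyz0) (kG G x y)).
apply: le_trans (ler_wpM2r (ltW kyz0) (le_trans hQ step)) _.
by rewrite -[X in _ <= X]mulr1; apply: ler_wpM2l.
Qed.
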